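(* Let $f$ be a probability density on $\mathbb{R}$ with unit second moment which is $g$-concentrated (with error functions $\lambda_n$). Suppose there exist $a_1,a_2,C_1,C_2>0$ with $C_1e^{-a_1v^2}\le f(v)\le C_2e^{a_2v^2}$ for all $v\in\mathbb{R}$. Then the family of conditioned tensorisations $F_N$ of $f$ is log-scalable with constant $$C_F=\max\{|\log C_1|,|\log C_2|\}+\max\{a_1,a_2\}+\sup_{N}\left|\frac{\log\left(2(2\pi)^{-1/2}+2\lambda_N(N)\right)}{N}-\frac{\log N}{2N}-\frac{\log\left(|\mathbb{S}^{N-1}|N^{\frac{N-2}{2}}\right)}{N}\right|,$$ and this supremum is finite.
   Context: $\mathbb{S}^{N-1}(r)$ is the sphere of radius $r$ in $\mathbb{R}^N$ with uniform probability measure $d\sigma^N_r$; $|\mathbb{S}^{n-1}|$ is the surface area of the unit sphere in $\mathbb{R}^n$. For a probability density $f$ on $\mathbb{R}$ with unit second moment, $\mathcal{Z}_N(f,r)=\int_{\mathbb{S}^{N-1}(r)}f^{\otimes N}d\sigma^N_r$ and the conditioned tensorisation is $F_N=f^{\otimes N}/\mathcal{Z}_N(f,\sqrt N)$ (a density w.r.t. $d\sigma^N_{\sqrt N}$). $f$ is $g$-concentrated if $\mathcal{Z}_N$ is well defined and for each fixed $k$, $\mathcal{Z}_{N-k}(f,\sqrt u)=\frac{2}{(N-k)^{1/2}|\mathbb{S}^{N-k-1}|u^{(N-k-2)/2}}\left(g(u-(N-k),N-k)+\lambda_{N-k}(u)\right)$, where $g$ is non-negative and bounded, $g(0,N)=(2\pi)^{-1/2}$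 for all $N$, $\lim_{N\to\infty}\sup_u|\lambda_N(u)|=0$, and for every $R>0$, $\lim_{N\to\infty}\sup_{|x|<R}|g(x,N)-(2\pi)^{-1/2}|=0$. A family $\{F_N\}$ is log-scalable with constant $C_F>0$ (independent of $N$) if $\sup_{\bm v\in\mathbb{S}^{N-1}(\sqrt N)}|\log F_N(\bm v)|\le C_FN$ for all $N$. *)

(* Defs.v *)
From HB Require Import structures.
From mathcomp Require Import all_boot all_order all_algebra.
From mathcomp Require Import all_classical all_reals all_analysis.
Set Implicit Arguments. Unset Strict Implicit. Unset Printing Implicit Defensive.
Import Order.TTheory GRing.Theory Num.Theory.
Import numFieldNormedType.Exports.
Local Open Scope classical_set_scope.
Local Open Scope ring_scope.

Section Defs.
Variable R : realType.

Definition vcons (n : nat) (x : R) (w : 'I_n -> R) : 'I_n.+1 -> R :=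
  fun i => if unlift ord0 i is Some j then w j else x.

(* Lebesgue integral over R^n of a nonnegative extended-real function,
   computed as an iterated integral (Tonelli). *)
Fixpoint iterint (n : nat) : (('I_n -> R) -> \bar R) -> \bar R :=
  match n return (('I_n -> R) -> \bar R) -> \bar R with
  | 0 => fun h => h (fun _ => 0)
  | m.+1 => fun h =>
      (\int[@lebesgue_measure R]_(x in setT) iterint (fun w => h (vcons x w)))%E
  end.

Definition enorm (n : nat) (x : 'I_n -> R) : R := Num.sqrt (\sum_(i < n) x i ^+ 2).

Definition ball_vol (n : nat) : \bar R :=
  iterint (fun x : 'I_n -> R => (if enorm x <= 1 then 1 else 0 : R)%:E).

(* |S^{n-1}| : surface area of the unit sphere in R^n (= n |B^n|) *)
Definition sphere_area (n : nat) : R := n%:R * fine (ball_vol n).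

(* Integral of a nonnegative h w.r.t. the uniform probability measure
   d sigma^n_r on S^{n-1}(r), defined as the normalized cone measure:
   int h d sigma_r = |B^n|^{-1} int_{|x|<=1} h (r x/|x|) dx. *)
Definition sphere_int (n : nat) (r : R) (h : ('I_n -> R) -> R) : \bar R :=
  (iterint (fun x : 'I_n -> R =>
     ((if enorm x <= 1 then 1 else 0 : R) * h (fun i => r * x i / enorm x))%:E)
   * ((fine (ball_vol n))^-1)%:E)%E.

Definition Zn (n : nat) (f : R -> R) (r : R) : \bar R :=
  sphere_int r (fun v : 'I_n -> R => \prod_(i < n) f (v i)).

Definition cond_tensor (f : R -> R) (N : nat) (v : 'I_N -> R) : R :=
  (\prod_(i < N) f (v i)) / fine (Zn N f (Num.sqrt N%:R)).

Definition prob_density_unit2 (f : R -> R) : Prop :=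
  [/\ measurable_fun setT f, (forall x, 0 <= f x),
      (\int[@lebesgue_measure R]_(x in setT) (f x)%:E = 1)%E &
      (\int[@lebesgue_measure R]_(x in setT) (x ^+ 2 * f x)%:E = 1)%E].

Definition g_concentrated (f : R -> R) (g : R -> nat -> R) (lam : nat -> R -> R)
  : Prop :=
  (forall n r, (0 < n)%N -> 0 < r -> Zn n f r \is a fin_num) /\
  [/\ (forall n u, (0 < n)%N -> 0 < u ->
         Zn n f (Num.sqrt u) =
         ((2 / (Num.sqrt n%:R * sphere_area n * u `^ ((n%:R - 2) / 2)))
            * (g (u - n%:R) n + lam n u))%:E),
      (exists M, forall x n, 0 <= g x n <= M),
      (forall n, g 0 n = (Num.sqrt (2 * pi))^-1),
      (forall e, 0 < e -> exists N0, forall n u, (N0 <= n)%N -> 0 < u ->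
         `|lam n u| <= e) &
      (forall Rad, 0 < Rad -> forall e, 0 < e -> exists N0, forall n x,
         (N0 <= n)%N -> `|x| < Rad -> `|g x n - (Num.sqrt (2 * pi))^-1| <= e)].

Definition log_scalable (F : forall N : nat, ('I_N -> R) -> R) (C : R) : Prop :=
  0 < C /\ forall N (v : 'I_N -> R), (0 < N)%N ->
    \sum_(i < N) v i ^+ 2 = N%:R -> `|ln (F N v)| <= C * N%:R.

Definition CF_term (lam : nat -> R -> R) (N : nat) : R :=
  ln (2 * (Num.sqrt (2 * pi))^-1 + 2 * lam N N%:R) / N%:R
  - ln N%:R / (2 * N%:R)
  - ln (sphere_area N * N%:R `^ ((N%:R - 2) / 2)) / N%:R.

Definition CF_set (lam : nat -> R -> R) : set R :=
  [set `|CF_term lam N| | N in [set N : nat | (0 < N)%N]].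

End Defs.

(* Main.v *)
Require Import Defs.
From HB Require Import structures.
From mathcomp Require Import all_boot all_order all_algebra.
From mathcomp Require Import all_classical all_reals all_analysis.
From mathcomp Require Import ring lra.
Import Order.TTheory GRing.Theory Num.Theory.
Import numFieldNormedType.Exports.
Local Open Scope classical_set_scope.
Local Open Scope ring_scope.

Import HBNNSimple.
Set Implicit Arguments. Unset Strict Implicit.
Section Aux.
Variable R : realType.
Local Notation leb := (@lebesgue_measure R).

Lemma int_le (F G : R -> \bar R) : (forall x, 0 <= F x)%E ->
  (forall x, F x <= G x)%E ->
  (\int[leb]_(x in setT) F x <= \int[leb]_(x in setT) G x)%E.
Proof.
move=> F0 FG.
have G0 x : (0 <= G x)%E by exact: le_trans (F0 x) (FG x).
rewrite !ge0_integralTE//.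
apply: ge_ereal_sup => _ [h hF <-].
apply: ereal_sup_ubound; exists h => // x; exact: le_trans (hF x) (FG x).
Qed.

Lemma int_scale_le (k : R) (F : R -> \bar R) : 0 < k -> (forall x, 0 <= F x)%E ->
  (\int[leb]_(x in setT) (k%:E * F x) <= k%:E * \int[leb]_(x in setT) F x)%E.
Proof.
move=> k0 F0.
have kF0 x : (0 <= k%:E * F x)%E by rewrite mule_ge0// lee_fin ltW.
rewrite !ge0_integralTE//.
apply: ge_ereal_sup => _ [h hF <-].
have ki0 : 0 <= k^-1 by rewrite invr_ge0 ltW.
pose h' := scale_nnsfun h ki0.
rewrite (_ : sintegral _ _ = (k%:E * sintegral leb h')%E); last first.
  rewrite /h' /scale_nnsfun /= sintegralrM muleA -EFinM divff ?gt_eqF// mul1e.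
  by [].
apply: lee_wpmul2l; first by rewrite lee_fin ltW.
apply: ereal_sup_ubound; exists h' => // x /=.
rewrite /h' /scale_nnsfun /=.
rewrite EFinM; apply: (le_trans (lee_wpmul2l _ (hF x))); first by rewrite lee_fin.
by rewrite muleA -EFinM mulVf ?gt_eqF// mul1e.
Qed.

Lemma int_scale (k : R) (F : R -> \bar R) : 0 <= k -> (forall x, 0 <= F x)%E ->
  (\int[leb]_(x in setT) (k%:E * F x) = k%:E * \int[leb]_(x in setT) F x)%E.
Proof.
rewrite le_eqVlt => /orP[/eqP <- F0|k0 F0].
  under eq_integral do rewrite mul0e.
  by rewrite integral0 mul0e.
apply/le_anti; rewrite int_scale_le//=.
have kF0 x : (0 <= k%:E * F x)%E by rewrite mule_ge0// lee_fin ltW.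
have ki0 : 0 < k^-1 by rewrite invr_gt0.
have := int_scale_le ki0 kF0.
under eq_integral do rewrite muleA -EFinM mulVf ?gt_eqF// mul1e.
move=> H; rewrite -(@lee_pmul2l _ k^-1%:E) ?lte_fin//.
by rewrite muleA -EFinM mulVf ?gt_eqF// mul1e.
Qed.

Lemma iterint_ge0 n (h : ('I_n -> R) -> \bar R) : (forall x, 0 <= h x)%E ->
  (0 <= iterint h)%E.
Proof.
elim: n h => [|n IH] h h0 /=; first exact: h0.
by apply: integral_ge0 => x _; apply: IH => w; exact: h0.
Qed.

Lemma iterint_le n (h1 h2 : ('I_n -> R) -> \bar R) : (forall x, 0 <= h1 x)%E ->
  (forall x, h1 x <= h2 x)%E -> (iterint h1 <= iterint h2)%E.
Proof.
elim: n h1 h2 => [|n IH] h1 h2 h0 h12 /=; first exact: h12.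
apply: int_le => x; first by apply: iterint_ge0 => w; exact: h0.
by apply: IH => w; [exact: h0|exact: h12].
Qed.

Lemma iterintZ n (k : R) (h : ('I_n -> R) -> \bar R) : 0 <= k ->
  (forall x, 0 <= h x)%E ->
  iterint (fun x => k%:E * h x)%E = (k%:E * iterint h)%E.
Proof.
elim: n h => [|n IH] h k0 h0 //=.
rewrite -int_scale//; last by move=> x; apply: iterint_ge0 => w; exact: h0.
by apply: eq_integral => x _; rewrite IH.
Qed.

Definition indc (c y : R) : R := if `|y| <= c then 1 else 0.

Lemma indc_ge0 c y : 0 <= indc c y.
Proof. by rewrite /indc; case: ifP. Qed.

Lemma int_indc c : 0 < c ->
  (\int[leb]_(x in setT) (indc c x)%:E = (2 * c)%:E)%E.
Proof.
move=> c0.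
have -> : (fun x => (indc c x)%:E) = (fun x => (\1_(`[-c, c]%classic) x)%:E).
  apply/funext => x; rewrite indicE /indc.
  case: ifP => H.
    by rewrite mem_set//= in_itv/= -ler_norml.
  by rewrite memNset//= in_itv/= -ler_norml H.
rewrite integral_indic//= setIT lebesgue_measure_itv /= lte_fin.
rewrite (_ : -c < c) ?gtrN//= -EFinD; congr (_%:E); ring.
Qed.

Lemma iterint_cube n c : 0 < c ->
  iterint (fun x : 'I_n -> R => (\prod_(i < n) indc c (x i))%:E) = ((2 * c) ^+ n)%:E.
Proof.
move=> c0; elim: n => [|n IH] /=; first by rewrite big_ord0 expr0.
have -> : (fun x => iterint (fun w : 'I_n -> R =>
     (\prod_(i < n.+1) indc c (vcons x w i))%:E)) =
  (fun x => ((indc c x)%:E * ((2 * c) ^+ n)%:E)%E).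
  apply/funext => x; rewrite -IH -iterintZ ?indc_ge0//; last first.
    by move=> w; rewrite lee_fin; apply: prodr_ge0 => i _; exact: indc_ge0.
  congr iterint; apply/funext => w.
  rewrite big_ord_recl -EFinM /vcons unlift_none; congr (_ * _)%:E.
  by apply: eq_bigr => i _; rewrite liftK.
under eq_integral do rewrite muleC.
rewrite int_scale ?exprn_ge0 ?mulr_ge0 ?ltW// => [|x]; last by rewrite lee_fin indc_ge0.
by rewrite int_indc// -EFinM exprSr.
Qed.


Lemma sum_le_enorm n (x : 'I_n -> R) : enorm x <= 1 -> \sum_(i < n) x i ^+ 2 <= 1.
Proof.
rewrite /enorm -{1}sqrtr1 ler_sqrt//.
Qed.

Lemma enorm_le1 n (x : 'I_n -> R) : \sum_(i < n) x i ^+ 2 <= 1 -> enorm x <= 1.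
Proof. by move=> H; rewrite /enorm -sqrtr1 ler_sqrt. Qed.

Lemma prod_indc_eq1 n c (x : 'I_n -> R) : (forall i, `|x i| <= c) ->
  \prod_(i < n) indc c (x i) = 1.
Proof. by move=> H; apply: big1 => i _; rewrite /indc H. Qed.

Lemma prod_indc_eq0 n c (x : 'I_n -> R) : ~~ [forall i, `|x i| <= c] ->
  \prod_(i < n) indc c (x i) = 0.
Proof.
rewrite negb_forall => /existsP[i Hi].
by rewrite (bigD1 i)//= /indc (negbTE Hi) mul0r.
Qed.

Definition ballind n (x : 'I_n -> R) : R := if enorm x <= 1 then 1 else 0.

Lemma ball_le_cube n (x : 'I_n -> R) : ballind x <= \prod_(i < n) indc 1 (x i).
Proof.
rewrite /ballind; case: ifP => H; last by apply: prodr_ge0 => i _; exact: indc_ge0.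
rewrite prod_indc_eq1// => i.
have := sum_le_enorm H.
rewrite (bigD1 i)//= => H1.
have H2 : 0 <= \sum_(j < n | j != i) x j ^+ 2 by apply: sumr_ge0 => j _; exact: sqr_ge0.
have H3 : x i ^+ 2 <= 1 by lra.
rewrite ler_norml; apply/andP; split; nra.
Qed.

Lemma cube_le_ball n (x : 'I_n -> R) : (0 < n)%N ->
  \prod_(i < n) indc (n%:R^-1) (x i) <= ballind x.
Proof.
move=> n0.
have np : 0 < n%:R :> R by rewrite ltr0n.
case: (boolP [forall i, `|x i| <= n%:R^-1]) => H; last first.
  by rewrite prod_indc_eq0// /ballind; case: ifP.
rewrite prod_indc_eq1; last by move=> i; exact: (forallP H).
rewrite /ballind enorm_le1//.
apply: (@le_trans _ _ (\sum_(i < n) (n%:R^-1 ^+ 2 : R))).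
  apply: ler_sum => i _; have := forallP H i; rewrite ler_norml => /andP[h1 h2].
  have h3 : 0 <= n%:R^-1 :> R by rewrite invr_ge0 ltW.
  nra.
rewrite sumr_const card_ord -[_ *+ n]mulr_natr.
have -> : n%:R^-1 ^+ 2 * n%:R = n%:R^-1 :> R by field; rewrite gt_eqF.
by rewrite invr_le1// ?ler1n// unitfE gt_eqF.
Qed.

Lemma ball_vol_pos n : (0 < n)%N -> exists b, ball_vol R n = b%:E /\ 0 < b.
Proof.
move=> n0.
have np : 0 < n%:R :> R by rewrite ltr0n.
have up : (ball_vol R n <= ((2 * 1) ^+ n)%:E)%E.
  rewrite -(iterint_cube n (@ltr01 R)) /ball_vol; apply: iterint_le => x.
    by rewrite lee_fin; case: ifP.
  by rewrite lee_fin; exact: (ball_le_cube x).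
have lo : (((2 * n%:R^-1) ^+ n)%:E <= ball_vol R n)%E.
  rewrite -(iterint_cube n (c := n%:R^-1)) ?invr_gt0// /ball_vol; apply: iterint_le => x.
    by rewrite lee_fin; apply: prodr_ge0 => i _; exact: indc_ge0.
  by rewrite lee_fin; exact: (cube_le_ball x n0).
have lo0 : 0 < (2 * n%:R^-1) ^+ n :> R by rewrite exprn_gt0// mulr_gt0// invr_gt0.
have fbv : ball_vol R n \is a fin_num.
  rewrite ge0_fin_numE; last by apply: le_trans lo; rewrite lee_fin ltW.
  exact: le_lt_trans up (ltry _).
exists (fine (ball_vol R n)); split; first by rewrite fineK.
by rewrite -lte_fin fineK// (lt_le_trans _ lo)// lte_fin.
Qed.

End Aux.

Section Main.
Variable R : realType.
Variables (f : R -> R) (a1 a2 C1 C2 : R).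
Hypotheses (a10 : 0 < a1) (a20 : 0 < a2) (C10 : 0 < C1) (C20 : 0 < C2).
Hypothesis fb : forall v, C1 * expR (- a1 * v ^+ 2) <= f v <= C2 * expR (a2 * v ^+ 2).

Definition mlo N : R := C1 ^+ N * expR (- a1 * N%:R).
Definition mhi N : R := C2 ^+ N * expR (a2 * N%:R).

Lemma mlo_gt0 N : 0 < mlo N.
Proof. by rewrite /mlo mulr_gt0// ?exprn_gt0// expR_gt0. Qed.

Lemma f_gt0 v : 0 < f v.
Proof.
have /andP[h _] := fb v; apply: lt_le_trans h.
by rewrite mulr_gt0// expR_gt0.
Qed.

Lemma prod_bounds N (v : 'I_N -> R) : \sum_(i < N) v i ^+ 2 <= N%:R ->
  mlo N <= \prod_(i < N) f (v i) <= mhi N.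
Proof.
move=> sN; apply/andP; split.
  apply: (@le_trans _ _ (\prod_(i < N) (C1 * expR (- a1 * v i ^+ 2)))); last first.
    apply: ler_prod => i _; have /andP[h _] := fb (v i).
    by rewrite h andbT mulr_ge0 ?ltW// ?expR_gt0.
  rewrite big_split /= prodr_const card_ord -expR_sum /mlo.
  apply: ler_wpM2l; first by rewrite exprn_ge0 ?ltW.
  by rewrite ler_expR -mulr_sumr !mulNr lerN2; apply: ler_wpM2l; [exact: ltW|exact: sN].
apply: (@le_trans _ _ (\prod_(i < N) (C2 * expR (a2 * v i ^+ 2)))).
  apply: ler_prod => i _; have /andP[_ h] := fb (v i).
  by rewrite h ltW// f_gt0.
rewrite big_split /= prodr_const card_ord -expR_sum /mhi.
apply: ler_wpM2l; first by rewrite exprn_ge0 ?ltW.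
by rewrite ler_expR -mulr_sumr; apply: ler_wpM2l; [exact: ltW|exact: sN].
Qed.

Lemma sphere_pt_sum N (x : 'I_N -> R) :
  \sum_(i < N) (Num.sqrt N%:R * x i / enorm x) ^+ 2 <= N%:R.
Proof.
set e := enorm x; set r := Num.sqrt N%:R.
have -> : \sum_(i < N) (r * x i / e) ^+ 2 = (r / e) ^+ 2 * \sum_(i < N) x i ^+ 2.
  rewrite mulr_sumr; apply: eq_bigr => i _; rewrite -exprMn; congr (_ ^+ _).
  by rewrite mulrAC.
have s0 : 0 <= \sum_(i < N) x i ^+ 2 by apply: sumr_ge0 => i _; exact: sqr_ge0.
have -> : \sum_(i < N) x i ^+ 2 = e ^+ 2 by rewrite /e /enorm sqr_sqrtr.
have e0 : 0 <= e by rewrite /e /enorm sqrtr_ge0.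
have r2 : r ^+ 2 = N%:R by rewrite /r sqr_sqrtr.
case: (eqVneq e 0) => [->|en0].
  by rewrite invr0 mulr0 expr0n /= mul0r.
rewrite -exprMn mulrAC -mulrA divff// mulr1 r2 //.
Qed.


Lemma Zn_bounds N : (0 < N)%N -> exists b z, ball_vol R N = b%:E /\ 0 < b /\
  Zn N f (Num.sqrt N%:R) = z%:E /\ mlo N <= z <= mhi N.
Proof.
move=> N0; have [b [bv b0]] := @ball_vol_pos R N N0.
pose h := fun x : 'I_N -> R =>
  (ballind x * \prod_(i < N) f (Num.sqrt N%:R * x i / enorm x))%:E.
have eqZ : Zn N f (Num.sqrt N%:R) = (iterint h * (b^-1)%:E)%E.
  by rewrite /Zn /sphere_int bv.
have bE : ball_vol R N = iterint (fun x : 'I_N -> R => (ballind x)%:E) by [].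
have lo : ((mlo N * b)%:E <= iterint h)%E.
  rewrite EFinM -bv bE -iterintZ; last by move=> x; rewrite lee_fin /ballind; case: ifP.
    apply: iterint_le => x.
      by rewrite -EFinM lee_fin mulr_ge0 ?(ltW (mlo_gt0 _))// /ballind; case: ifP.
    rewrite -EFinM lee_fin /ballind; case: ifP => _; rewrite ?mulr0 ?mul0r// mulr1 mul1r.
    by have /andP[] := prod_bounds (sphere_pt_sum x).
  exact: ltW (mlo_gt0 _).
have mup0 : 0 <= mhi N by rewrite /mhi mulr_ge0 ?exprn_ge0 ?ltW// expR_gt0.
have up : (iterint h <= (mhi N * b)%:E)%E.
  rewrite EFinM -bv bE -iterintZ//; last by move=> x; rewrite lee_fin /ballind; case: ifP.
  apply: iterint_le => x.
    rewrite lee_fin /ballind; case: ifP => _; rewrite ?mul0r// mul1r.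
    by apply: prodr_ge0 => i _; exact: ltW (f_gt0 _).
  rewrite -EFinM lee_fin /ballind; case: ifP => _; rewrite ?mulr0 ?mul0r// mulr1 mul1r.
  by have /andP[] := prod_bounds (sphere_pt_sum x).
have fh : iterint h \is a fin_num.
  rewrite ge0_fin_numE; last by apply: le_trans lo; rewrite lee_fin mulr_ge0 ?ltW ?mlo_gt0.
  exact: le_lt_trans up (ltry _).
exists b, (fine (iterint h) / b); split=> //; split=> //; split.
  by rewrite eqZ -(fineK fh) -EFinM.
move: lo up; rewrite -(fineK fh) !lee_fin => lo up.
by rewrite ler_pdivlMr// ler_pdivrMr// lo up.
Qed.

End Main.

Lemma ln_bound (R : realType) (a1 a2 C1 C2 : R) N z : (0 < a1) -> (0 < a2) -> 0 < C1 -> 0 < C2 ->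
  (0 < N)%N -> mlo a1 C1 N <= z <= mhi a2 C2 N ->
  `|ln z| <= (Num.max `|ln C1| `|ln C2| + Num.max a1 a2) * N%:R.
Proof.
move=> a10 a20 C10 C20 N0 /andP[lo up].
have Np : 0 < N%:R :> R by rewrite ltr0n.
have z0 : 0 < z by apply: lt_le_trans lo; exact: mlo_gt0.
have lo' : ln (mlo a1 C1 N) <= ln z by rewrite ler_ln ?posrE ?mlo_gt0.
have up' : ln z <= ln (mhi a2 C2 N).
  by rewrite ler_ln ?posrE// /mhi mulr_gt0 ?exprn_gt0// expR_gt0.
have L1 : ln (mlo a1 C1 N) = ln C1 * N%:R + - a1 * N%:R.
  by rewrite /mlo lnM ?posrE ?exprn_gt0 ?expR_gt0 // expRK lnXn // !mulr_natr.
have L2 : ln (mhi a2 C2 N) = ln C2 * N%:R + a2 * N%:R.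
  by rewrite /mhi lnM ?posrE ?exprn_gt0 ?expR_gt0 // expRK lnXn // !mulr_natr.
rewrite L1 in lo'; rewrite L2 in up'.
have /andP[h1 h1'] : - `|ln C1| <= ln C1 <= `|ln C1| by rewrite -ler_norml.
have /andP[h2 h2'] : - `|ln C2| <= ln C2 <= `|ln C2| by rewrite -ler_norml.
have m1 : `|ln C1| <= Num.max `|ln C1| `|ln C2| by rewrite le_max lexx.
have m2 : `|ln C2| <= Num.max `|ln C1| `|ln C2| by rewrite le_max lexx orbT.
have m3 : a1 <= Num.max a1 a2 by rewrite le_max lexx.
have m4 : a2 <= Num.max a1 a2 by rewrite le_max lexx orbT.
set M1 := Num.max _ _ in m1 m2 *; set M2 := Num.max a1 a2 in m3 m4 *.
have e1 : - M1 * N%:R <= ln C1 * N%:R by rewrite ler_pM2r//; lra.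
have e2 : a1 * N%:R <= M2 * N%:R by rewrite ler_pM2r.
have e3 : ln C2 * N%:R <= M1 * N%:R by rewrite ler_pM2r//; lra.
have e4 : a2 * N%:R <= M2 * N%:R by rewrite ler_pM2r.
rewrite ler_norml; apply/andP; split; lra.
Qed.

Theorem theorem3p4 (R : realType) (f : R -> R) (g : R -> nat -> R)
  (lam : nat -> R -> R) (a1 a2 C1 C2 : R) :
  prob_density_unit2 f ->
  g_concentrated f g lam ->
  0 < a1 -> 0 < a2 -> 0 < C1 -> 0 < C2 ->
  (forall v, C1 * expR (- a1 * v ^+ 2) <= f v <= C2 * expR (a2 * v ^+ 2)) ->
  has_ubound (CF_set lam) /\
  log_scalable (cond_tensor f)
    (Num.max `|ln C1| `|ln C2| + Num.max a1 a2 + sup (CF_set lam)).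
Proof.
move=> _ [_ [Zeq _ g0 _ _]] a10 a20 C10 C20 fb.
set K := Num.max `|ln C1| `|ln C2| + Num.max a1 a2.
have key : forall N, (0 < N)%N -> exists z,
    Zn N f (Num.sqrt N%:R) = z%:E /\ mlo a1 C1 N <= z <= mhi a2 C2 N /\
    ln z = CF_term lam N * N%:R.
  move=> N N0.
  have [b [z [bv [b0 [Ze zb]]]]] := Zn_bounds a10 a20 C10 C20 fb N0.
  exists z; split=> //; split=> //.
  have Np : 0 < N%:R :> R by rewrite ltr0n.
  have z0 : 0 < z by case/andP: zb => h _; apply: lt_le_trans h; exact: mlo_gt0.
  have := Zeq N N%:R N0 Np; rewrite Ze subrr g0; case => Hz.
  have SE : sphere_area R N = N%:R * b by rewrite /sphere_area bv.
  rewrite SE in Hz *.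
  set sN := Num.sqrt N%:R in Hz *.
  set P := N%:R `^ ((N%:R - 2) / 2) in Hz *.
  have sN0 : 0 < sN by rewrite sqrtr_gt0.
  have P0 : 0 < P by rewrite powR_gt0.
  have L0 : 0 < N%:R * b * P by rewrite !mulr_gt0.
  have sNN : ln sN * 2 = ln N%:R.
    have -> : N%:R = sN * sN :> R by rewrite -expr2 /sN sqr_sqrtr ?ler0n.
    by rewrite lnM ?posrE//; ring.
  set c := (Num.sqrt (2 * pi))^-1 in Hz *.
  have E2 : 2 * c + 2 * lam N N%:R = z * (sN * (N%:R * b * P)).
    have DE : sN * (N%:R * b * P) = sN * (N%:R * b) * P by rewrite !mulrA.
    have D0 : sN * (N%:R * b) * P != 0 by rewrite -DE gt_eqF// mulr_gt0.
    by rewrite DE Hz mulrAC divfK// mulrDr.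
  rewrite /CF_term -/c E2 SE -/sN -/P.
  rewrite (@lnM _ z) ?posrE ?mulr_gt0// (@lnM _ sN) ?posrE ?mulr_gt0// -sNN.
  by field; rewrite gt_eqF.
have CFb : forall N, (0 < N)%N -> `|CF_term lam N| <= K.
  move=> N N0; have [z [_ [zb lnz]]] := key N N0.
  have Np : 0 < N%:R :> R by rewrite ltr0n.
  have := ln_bound a10 a20 C10 C20 N0 zb.
  by rewrite lnz normrM (ger0_norm (ltW Np)) ler_pM2r.
have hub : has_ubound (CF_set lam) by exists K => _ [N N0 <-]; exact: CFb.
have supge : forall N, (0 < N)%N -> `|CF_term lam N| <= sup (CF_set lam).
  by move=> N N0; apply: (ub_le_sup hub); exists N.
split=> //; split.
  have h1 := supge 1%N isT.
  have h2 : 0 <= `|CF_term lam 1| by [].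
  have h3 : a1 <= Num.max a1 a2 by rewrite le_max lexx.
  have h4 : 0 <= Num.max `|ln C1| `|ln C2| by rewrite le_max normr_ge0.
  rewrite /K; lra.
move=> N v N0 sv.
have [z [Ze [zb lnz]]] := key N N0.
have Np : 0 < N%:R :> R by rewrite ltr0n.
have z0 : 0 < z by case/andP: zb => h _; apply: lt_le_trans h; exact: mlo_gt0.
rewrite /cond_tensor Ze /=.
have sv2 : \sum_(i < N) v i ^+ 2 <= N%:R by rewrite sv.
have Pb := prod_bounds a10 a20 C10 C20 fb sv2.
set P := \prod_(i < N) f (v i) in Pb *.
have P0 : 0 < P by case/andP: Pb => h _; apply: lt_le_trans h; exact: mlo_gt0.
rewrite ln_div ?posrE//.
have h1 := ln_bound a10 a20 C10 C20 N0 Pb.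
have h2 : `|ln z| <= sup (CF_set lam) * N%:R.
  by rewrite lnz normrM (ger0_norm (ltW Np)) ler_pM2r// supge.
apply: le_trans (ler_normB _ _) _.
by rewrite mulrDl lerD.
Qed.
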